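(* Let $r_I>r_0>0$, $v_1,v_2>0$, $w_V>0$ and $w_I$ be real numbers with $w_I\ge \frac{w_V v_2}{v_1+v_2}$. Let $n\ge 1$ be an integer and $l_1,\dots,l_{n-1}\ge 0$ be real numbers. Consider the optimization problem (P) described in the context. Then the optimal value of (P) is $$\left(\sum_{i=1}^{n}Y_i\right)^*=\frac{\sum_{i=1}^{n-1}\min\{l_i,2r_0\}+2r_0}{v_1+v_2}\,w_V .$$ Moreover, this optimal value is attained by the feasible point $$D_i^*=\frac{\min\{l_i,2r_I\}}{v_2}w_I,\quad Y_i^*=\frac{\min\{l_i,2r_0\}}{v_1+v_2}w_V\ (i=1,\dots,n-1),\qquad D_n^*=\frac{2r_I}{v_2}w_I,\quad Y_n^*=\frac{2r_0}{v_1+v_2}w_V .$$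
   Context: Model: a vehicle of interest (VoI) moving at speed $v_1$ receives data from $n$ ''helper'' vehicles moving in the opposite direction at speed $v_2$; consecutive helpers are at distances $l_1,\dots,l_{n-1}$; helpers download from an infrastructure point of radio range $r_I$ at rate $w_I$, and deliver to the VoI over vehicle links of range $r_0$ at rate $w_V$. $D_i$ is the amount of data helper $i$ receives from the infrastructure and $Y_i$ the amount it delivers to the VoI. The optimization problem (P), over real variables $D_1,\dots,D_n,Y_1,\dots,Y_n$, is: maximize $\sum_{i=1}^n Y_i$ subject to (i) $0\le D_i\le \frac{2r_I}{v_2}w_I$ for $i=1,\dots,n$; (ii) $\sum_{i=k_1}^{k_2}D_i\le \frac{\sum_{i=k_1}^{k_2-1}\min\{l_i,2r_I\}+2r_I}{v_2}w_I$ for all $1\le k_1\le k_2\le n$; (iii) $0\le Y_i\le \frac{2r_0}{v_1+v_2}w_V$ for $i=1,\dots,n$; (iv) $Y_i\le D_i$ for $i=1,\dots,n$; (v) $\sum_{i=k_1}^{k_2}Y_i\le \frac{\sum_{i=k_1}^{k_2-1}\min\{l_i,2r_0\}+2r_0}{v_1+v_2}w_V$ for all $1\le k_1\le k_2\le n$. (Empty sums are zero.) *)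

(* Defs.v *)
(* R : realFieldType. Indices are 0-based:
   helpers i = 0..n-1 (paper's i+1), gaps l i for i = 0..n-2 (paper's l_{i+1}). *)
From mathcomp Require Import all_boot all_order all_algebra.
Set Implicit Arguments. Unset Strict Implicit. Unset Printing Implicit Defensive.
Import Order.TTheory GRing.Theory Num.Theory.
Local Open Scope ring_scope.

Section Problem.
Variables (R : realFieldType) (rI r0 v1 v2 wI wV : R) (n : nat) (l : nat -> R).

Definition feasible (D Y : nat -> R) : Prop :=
  (forall i, (i < n)%N -> 0 <= D i /\ D i <= (2 * rI) / v2 * wI) /\
  (forall k1 k2, (k1 <= k2)%N -> (k2 < n)%N ->
     \sum_(k1 <= i < k2.+1) D i <=
     (\sum_(k1 <= i < k2) Num.min (l i) (2 * rI) + 2 * rI) / v2 * wI) /\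
  (forall i, (i < n)%N -> 0 <= Y i /\ Y i <= (2 * r0) / (v1 + v2) * wV) /\
  (forall i, (i < n)%N -> Y i <= D i) /\
  (forall k1 k2, (k1 <= k2)%N -> (k2 < n)%N ->
     \sum_(k1 <= i < k2.+1) Y i <=
     (\sum_(k1 <= i < k2) Num.min (l i) (2 * r0) + 2 * r0) / (v1 + v2) * wV).

Definition objective (Y : nat -> R) : R := \sum_(0 <= i < n) Y i.

Definition optval : R :=
  (\sum_(0 <= i < n.-1) Num.min (l i) (2 * r0) + 2 * r0) / (v1 + v2) * wV.

Definition Dstar (i : nat) : R :=
  if (i < n.-1)%N then Num.min (l i) (2 * rI) / v2 * wI else (2 * rI) / v2 * wI.

Definition Ystar (i : nat) : R :=
  if (i < n.-1)%N then Num.min (l i) (2 * r0) / (v1 + v2) * wV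
  else (2 * r0) / (v1 + v2) * wV.

End Problem.

(* Main.v *)
Require Import Defs.
From mathcomp Require Import all_boot all_order all_algebra.
Import Order.TTheory GRing.Theory Num.Theory.
Local Open Scope ring_scope.

Lemma sum_bound (R : realFieldType) (F a : nat -> R) (k1 k2 : nat) (b c w : R) :
 (k1 <= k2)%N -> (forall i, (k1 <= i < k2)%N -> F i = a i / c * w) ->
 F k2 <= b / c * w ->
 \sum_(k1 <= i < k2.+1) F i <= (\sum_(k1 <= i < k2) a i + b) / c * w.
Proof.
move=> hk hF hb; rewrite big_nat_recr //= mulrDl mulrDl mulr_suml mulr_suml.
rewrite lerD // le_eqVlt; apply/orP; left; apply/eqP.
by apply: eq_big_nat => i hi; rewrite hF.
Qed.

Lemma sum_eq (R : realFieldType) (F a : nat -> R) (k : nat) (b c w : R) :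
 (forall i, (i < k)%N -> F i = a i / c * w) ->
 \sum_(0 <= i < k) F i + b / c * w = (\sum_(0 <= i < k) a i + b) / c * w.
Proof.
move=> hF; rewrite mulrDl mulrDl mulr_suml mulr_suml; congr (_ + _).
by apply: eq_big_nat => i /andP[_ hi]; rewrite hF.
Qed.

Theorem theorem2 (R : realFieldType) (rI r0 v1 v2 wI wV : R) (n : nat)
    (l : nat -> R) :
  0 < r0 -> r0 < rI -> 0 < v1 -> 0 < v2 -> 0 < wV ->
  wV * v2 / (v1 + v2) <= wI ->
  (1 <= n)%N ->
  (forall i, (i < n.-1)%N -> 0 <= l i) ->
  (forall D Y : nat -> R, feasible rI r0 v1 v2 wI wV n l D Y ->
     objective n Y <= optval r0 v1 v2 wV n l) /\
  feasible rI r0 v1 v2 wI wV n l (Dstar rI v2 wI n l) (Ystar r0 v1 v2 wV n l) /\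
  objective n (Ystar r0 v1 v2 wV n l) = optval r0 v1 v2 wV n l.
Proof.
move=> hr0 hrI hv1 hv2 hwV hwI hn hl.
have hv12 : 0 < v1 + v2 by rewrite addr_gt0.
have hwI0 : 0 < wI.
  by apply: lt_le_trans hwI; rewrite divr_gt0 // mulr_gt0.
have hK : wV / (v1 + v2) <= wI / v2.
  by rewrite ler_pdivlMr // mulrAC.
have mono : forall x y c w : R, 0 < c -> 0 < w -> x <= y -> x / c * w <= y / c * w.
  move=> x y c w hc hw hxy; rewrite ler_pM2r // ler_pM2r ?invr_gt0 //.
have h2 : 2 * r0 <= 2 * rI by rewrite ler_pM2l // ltW.
have hnn : n = n.-1.+1 by rewrite prednK.
split.
  move=> D Y [_ [_ [_ [_ h5]]]].
  rewrite /objective /optval {1}hnn; apply: h5 => //.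
  by rewrite -hnn.
split; last first.
  rewrite /objective /optval {1}hnn big_nat_recr //= {2}/Ystar ltnn /=.
  by apply: sum_eq => i hi; rewrite /Ystar hi.
have m0 : forall i, (i < n.-1)%N -> 0 <= Num.min (l i) (2 * r0).
  by move=> i hi; rewrite le_min hl // mulr_ge0 // ltW.
have mI : forall i, (i < n.-1)%N -> 0 <= Num.min (l i) (2 * rI).
  by move=> i hi; rewrite le_min hl // mulr_ge0 // ltW // (lt_trans hr0).
have hrI0 : 0 < rI by apply: lt_trans hrI.
split.
  move=> i hi; rewrite /Dstar; case: ifP => h; split.
  - by rewrite mulr_ge0 ?divr_ge0 ?mI // ltW.
  - by apply: mono => //; rewrite ge_min lexx orbT.
  - by rewrite mulr_ge0 ?divr_ge0 ?mulr_ge0 // ltW.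
  - by [].
split.
  move=> k1 k2 hk hk2; apply: sum_bound => //.
    by move=> i /andP[_ hi]; rewrite /Dstar ifT // (leq_trans hi) // -ltnS -hnn.
  rewrite /Dstar; case: ifP => // _.
  by apply: mono => //; rewrite ge_min lexx orbT.
split.
  move=> i hi; rewrite /Ystar; case: ifP => h; split.
  - by rewrite mulr_ge0 ?divr_ge0 ?m0 // ltW.
  - by apply: mono => //; rewrite ge_min lexx orbT.
  - by rewrite mulr_ge0 ?divr_ge0 ?mulr_ge0 // ltW.
  - by [].
split.
  move=> i hi; rewrite /Ystar /Dstar; case: ifP => h.
    rewrite -!mulrA; apply: ler_pM.
    - exact: m0.
    - by apply: mulr_ge0; [rewrite invr_ge0|]; apply: ltW.
    - by rewrite le_min !ge_min lexx h2 orbT.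
    - by rewrite mulrC [_ * wI]mulrC.
  rewrite -(mulrA (2 * r0)) -(mulrA (2 * rI)); apply: ler_pM.
  - by apply: mulr_ge0 => //; apply: ltW.
  - by apply: mulr_ge0; [rewrite invr_ge0|]; apply: ltW.
  - exact: h2.
  - by rewrite mulrC [_ * wI]mulrC.
move=> k1 k2 hk hk2; apply: sum_bound => //.
  by move=> i /andP[_ hi]; rewrite /Ystar ifT // (leq_trans hi) // -ltnS -hnn.
rewrite /Ystar; case: ifP => // _.
by apply: mono => //; rewrite ge_min lexx orbT.
Qed.
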